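(* Let $w,s,t$ be positive integers with $t\mid s$ and $t\ne s$, and suppose $2\mid s/t$ but $4\nmid s/t$. For $l\in I\big(s/(2t)\big)$ set $$f(l)=\sum_{k\in\{l,\;2l\}}(-1)^{\omega(s/(kt))}(-1)^{ktw}\binom{k(tw-1)-1}{k-1}.$$ Then $f(l)\equiv0\pmod 4$ for every $l\in I\big(s/(2t)\big)$.
   Context: For a positive integer $n$, $\omega(n)$ is the number of distinct primes dividing $n$, and $I(n)=\{k\in\mathbb{N}: k\mid n \text{ and } n/k \text{ is square-free}\}$. Binomial coefficients $\binom{n}{m}$ with $n\in\mathbb{Z}$, $m\ge0$ mean $n(n-1)\cdots(n-m+1)/m!$. *)

(* Defs.v *)
From mathcomp Require Import all_boot all_order all_algebra.
Import GRing.Theory Num.Theory.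
Local Open Scope ring_scope.

Definition omega (n : nat) : nat := size (primes n).

Definition squarefree (n : nat) : bool :=
  (0 < n)%N && all (fun p => (logn p n <= 1)%N) (primes n).

Definition inI (n k : nat) : bool :=
  [&& (0 < k)%N, (k %| n)%N & squarefree (n %/ k)].

Definition gbinom (n : int) (m : nat) : rat :=
  (\prod_(i < m) ((n - (i : nat)%:Z)%:~R : rat)) / (m`!)%:R.

Definition fterm (s t w k : nat) : rat :=
  (-1) ^+ omega (s %/ (k * t)) * (-1) ^+ (k * t * w)
  * gbinom ((k%:Z * ((t * w)%:Z - 1)) - 1) (k.-1).

Definition f (s t w l : nat) : rat := fterm s t w l + fterm s t w (2 * l).

(* Main.v *)
Require Import Defs.
From mathcomp Require Import all_boot all_order all_algebra.
From mathcomp Require Import ring lra zify.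
Import GRing.Theory Num.Theory.
Local Open Scope ring_scope.

Definition D4 (x : rat) := exists z : int, x = 4%:R * z%:~R.

Lemma D4D x y : D4 x -> D4 y -> D4 (x + y).
Proof. by move=> [a ->] [b ->]; exists (a + b); rewrite rmorphD /= mulrDr. Qed.
Lemma D4N x : D4 x -> D4 (- x).
Proof. by move=> [a ->]; exists (- a); rewrite rmorphN /= mulrN. Qed.
Lemma D4Mn x (c : nat) : D4 x -> D4 (c%:R * x).
Proof. move=> [a ->]; exists (c%:Z * a); rewrite rmorphM /=. 
  rewrite -[c%:R]/(c%:Z%:~R : rat). ring. Qed.
Lemma D4n (c : nat) : D4 (4%:R * c%:R).
Proof. by exists c%:Z. Qed.
Lemma D4e x y : D4 x -> x = y -> D4 y.
Proof. by move=> h <-. Qed.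
Arguments D4D {x y}. Arguments D4N {x}. Arguments D4Mn {x}. Arguments D4e {x y}.

Lemma EO (n : nat) : forall k,
  D4 ('C(2*n, 2*k)%:R - 'C(n, k)%:R) /\
  D4 ('C(2*n, (2*k).+1)%:R - 2%:R * n%:R * 'C(n.-1, k)%:R).
Proof.
elim: n => [|n IH] k.
  rewrite muln0 !bin0n; split; last by exists 0; rewrite mulr0 mul0r mulr0 subr0.
  by exists 0; case: k => //=; rewrite subrr mulr0.
have e2 : (2 * n.+1 = (2 * n).+2)%N by rewrite mulnS.
rewrite e2; split.
  case: k => [|k]; first by rewrite muln0 !bin0; exists 0; rewrite subrr mulr0.
  have e3 : (2 * k.+1 = (2 * k).+2)%N by rewrite mulnS.
  rewrite e3 !binS.
  have [h1 h2] := IH k.+1; have [h3 h4] := IH k.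
  rewrite e3 in h1 h2.
  have := D4D (D4D h1 h3) (D4D (D4Mn 2 h4) (D4n (n * 'C(n.-1,k))%N)). move=> H; apply: D4e H _.
  rewrite !natrD ?natrM. ring.
case: k => [|k].
  rewrite muln0 bin1 bin0 /=. rewrite -e2 natrM. exists 0. ring.
have e3 : (2 * k.+1 = (2 * k).+2)%N by rewrite mulnS.
rewrite e3 !binS.
have [h1 h2] := IH k.+1; have [h3 h4] := IH k.
rewrite e3 in h1 h2.
have key : (n * 'C(n.-1, k.+1) + n * 'C(n.-1, k) = n * 'C(n, k.+1))%N.
  by case: n {IH h1 h2 h3 h4 e2} => [|n] //=; rewrite binS mulnDr.
have keyR : (n%:R * 'C(n.-1, k.+1)%:R + n%:R * 'C(n.-1, k)%:R : rat) = n%:R * 'C(n, k.+1)%:R.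
  by rewrite -?natrM -natrD key.
apply: (D4e (D4D (D4D h2 h4) (D4Mn 2 h1))).
rewrite !natrD -[n.+1.-1]/n.
rewrite -[n.+1]addn1 natrD.
apply/eqP; rewrite -subr_eq0; apply/eqP.
transitivity (2 * (n%:R * 'C(n, k.+1)%:R - (n%:R * 'C(n.-1, k.+1)%:R + n%:R * 'C(n.-1, k)%:R)) : rat); first ring.
by rewrite keyR subrr mulr0.
Qed.

Lemma coreOdd m j : D4 ('C((2 * (2 * m)).+1, (2 * j).+1)%:R - 'C(2 * m, j)%:R).
Proof.
have [h1 h2] := EO (2 * m) j.
apply: (D4e (D4D (D4D h2 h1) (D4n (m * 'C((2 * m).-1, j))%N))).
rewrite binS !natrD ?natrM. ring.
Qed.

Lemma coreEven m i : D4 ('C((2 * (2 * m).+1).+1, (2 * (2 * i)).+1)%:R + 'C((2 * m).+1, 2 * i)%:R).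
Proof.
have [h1 h2] := EO (2 * m).+1 (2 * i).
case: i h1 h2 => [|i] h1 h2.
  rewrite !muln0 bin1 bin0; apply: (D4e (D4n m.+1)).
  rewrite -natrM -natrD; congr (_%:R); lia.
have [h3 h4] := EO m i.
have e : (2 * i.+1 = (2 * i).+2)%N by rewrite mulnS.
rewrite e in h1 h2 *.
rewrite -[(2 * m).+1.-1]/(2 * m)%N in h2.
move: h1 h2 h3 h4.
generalize (2 * (2 * m).+1)%N (2 * (2 * i).+2)%N => T U h1 h2 h3 h4.
apply: (D4e (D4D (D4D h2 h1) (D4D (D4n (m.+1 * 'C(2 * m, (2 * i).+2))%N) (D4D (D4Mn 2 h4) (D4n (m * 'C(m.-1, i))%N))))).
rewrite (binS T U) (binS (2 * m) (2 * i).+1) !natrD ?natrM. ring.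
Qed.

Lemma prod_nat (N m : nat) :
  \prod_(i < m) (((N%:Z - (i : nat)%:Z)%:~R) : rat) = (N ^_ m)%:R.
Proof.
elim: m => [|m IH]; first by rewrite big_ord0 ffactn0.
rewrite big_ord_recr /= IH ffactnSr natrM.
case: (leqP m N) => hm.
  by rewrite subzn.
by rewrite ffact_small // mul0r mul0r.
Qed.

Lemma gbinom_nat (N m : nat) : gbinom N%:Z m = 'C(N, m)%:R.
Proof.
rewrite /gbinom prod_nat -bin_ffact natrM mulfK //.
by rewrite pnatr_eq0 -lt0n fact_gt0.
Qed.

Lemma prod_m1 (m : nat) :
  \prod_(i < m) (((-1 - (i : nat)%:Z)%:~R) : rat) = (-1) ^+ m * (m`!)%:R.
Proof.
elim: m => [|m IH]; first by rewrite big_ord0 expr0 mul1r.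
rewrite big_ord_recr /= IH factS natrM exprS.
rewrite rmorphB /= rmorphN /=. rewrite -natr1 mulr1z pmulrn. ring.
Qed.

Lemma gbinom_m1 (m : nat) : gbinom (-1) m = (-1) ^+ m.
Proof.
rewrite /gbinom prod_m1 mulfK //.
by rewrite pnatr_eq0 -lt0n fact_gt0.
Qed.

Lemma D4sign k x : D4 x -> D4 ((-1) ^+ k * x).
Proof. by move=> h; rewrite -signr_odd; case: (odd k); rewrite ?expr1 ?expr0 ?mulN1r ?mul1r //; apply: D4N. Qed.

Lemma omega2 r : odd r -> omega (2 * r) = (omega r).+1.
Proof.
move=> hr; have r0 : (0 < r)%N by case: r hr.
rewrite /omega -[(size (primes r)).+1]/(size (2 :: primes r)).
apply: perm_size; apply: uniq_perm.
- exact: primes_uniq.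
- rewrite /= primes_uniq andbT mem_primes dvdn2 hr.
  by rewrite !andbF.
move=> p; rewrite in_cons primesM // (mem_primes p 2) /=.
congr (_ || _).
apply/andP/eqP => [[pp]|->] //.
by rewrite dvdn_prime2 // => /eqP.
Qed.

Lemma ea (a : nat) : (a.+1)%:Z - 1 = a%:Z.
Proof. by rewrite -addn1 PoszD addrK. Qed.

Lemma half_even M : ~~ odd M -> (M = 2 * M./2)%N.
Proof. by move=> h; rewrite -[in LHS](odd_double_half M) (negbTE h) add0n -mul2n. Qed.
Lemma half_odd M : odd M -> (M = (2 * M./2).+1)%N.
Proof. by move=> h; rewrite -[in LHS](odd_double_half M) h add1n -mul2n. Qed.

Theorem lemma3p4 (w s t : nat) :
  (0 < w)%N -> (0 < s)%N -> (0 < t)%N ->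
  (t %| s)%N -> t <> s ->
  (2 %| s %/ t)%N -> ~~ (4 %| s %/ t)%N ->
  forall l : nat, inI (s %/ (2 * t)) l ->
  exists z : int, f s t w l = 4%:R * z%:~R.
Proof.
move=> w0 s0 t0 ts nts h2 h4 l hl.
case/and3P: hl => l0 lp _.
have sq : (s = (s %/ t) * t)%N by rewrite divnK.
move: h2 h4 sq lp; set q := (s %/ t)%N => h2 h4 sq lp.
have ep : (s %/ (2 * t) = q %/ 2)%N by rewrite {1}sq divnMr.
rewrite ep in lp.
move: lp; set p := (q %/ 2)%N => lp.
have qp : (q = 2 * p)%N by rewrite mulnC divnK.
have podd : odd p.
  case: (boolP (odd p)) => // pe; exfalso; move: h4; rewrite qp (half_even _ pe) mulnA.
  by rewrite (dvdn_mulr _ (dvdnn 4)).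
have pr : (p = (p %/ l) * l)%N by rewrite divnK.
move: pr; set r := (p %/ l)%N => pr.
have : odd p by [].
rewrite pr oddM => /andP [rodd lodd].
have e1 : (s %/ (l * t) = 2 * r)%N by rewrite sq divnMr // qp pr mulnA mulnK.
have e2 : (s %/ (2 * l * t) = r)%N.
  by rewrite sq divnMr // qp pr mulnCA mulnK // muln_gt0.
have tw0 : (0 < t * w)%N by rewrite muln_gt0 t0.
have [a ta] : exists a, (t * w = a.+1)%N by exists (t * w).-1; rewrite prednK.
have s1 : (-1) ^+ (l * t * w) = (-1) ^+ (a.+1) :> rat.
  by rewrite -!mulnA ta -signr_odd oddM lodd andTb signr_odd.
have s2 : (-1) ^+ (2 * l * t * w) = 1 :> rat.
  by rewrite -signr_odd -!mulnA oddM /= expr0.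
clear lp pr ep; clearbody r. case: l l0 lodd e1 e2 s1 s2 => // j _ jodd e1 e2 s1 s2.
have jev : ~~ odd j by [].
change (D4 (f s t w j.+1)).
rewrite /f /fterm e1 e2 omega2 // s1 s2 ta ea.
have e3 : (2 * j.+1).-1 = (2 * j).+1 by rewrite mulnS.
rewrite e3 -[j.+1.-1]/j.
suff H : D4 (gbinom ((2 * j.+1)%N%:Z * a%:Z - 1) (2 * j).+1 + (-1) ^+ a * gbinom ((j.+1)%:Z * a%:Z - 1) j).
  apply: (D4e (D4sign (omega r) _ H)); rewrite !exprS; ring.
case: a ta {s1 s2} => [|a] ta.
  have sj : (-1) ^+ j = 1 :> rat by rewrite -signr_odd (negbTE jev).
  have s2j : (-1) ^+ (2 * j).+1 = -1 :> rat by rewrite -signr_odd oddS oddM /= expr1.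
  rewrite !mulr0 !sub0r !gbinom_m1 sj s2j expr0 mulr1.
  by exists 0; rewrite mulr0 addrC subrr.
have [M lM] : exists M, (j.+1 * a.+1 = M.+1)%N by exists (j.+1 * a.+1).-1; rewrite prednK // muln_gt0.
have lM2 : (2 * j.+1 * a.+1 = (2 * M).+2)%N by rewrite -mulnA lM mulnS.
rewrite -!PoszM lM lM2 !ea !gbinom_nat.
have hM : odd M.+1 = odd a.+1 by rewrite -lM oddM jodd.
case: (boolP (odd a.+1)) => ha.
  have Mev : ~~ odd M by rewrite -hM in ha.
  rewrite -signr_odd ha expr1 mulN1r.
  rewrite (half_even _ Mev); exact: coreOdd.
have Mod : odd M by move: hM; rewrite (negbTE ha) /= => /negbFE.
rewrite -signr_odd (negbTE ha) expr0 mul1r.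
rewrite (half_odd _ Mod) (half_even _ jev); exact: coreEven.
Qed.
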